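(* Let $n\ge2$ and let $C\subset\mathbb{S}^{n-1}$ be a spherical code with $|C|=n+1$, and let $y_C:=\frac{1}{n+1}\sum_{y\in C}y$ be its centroid. Then there exists $x\in\mathbb{S}^{n-1}$ with $x\cdot y\in[-1,1/n]$ for all $y\in C$, and $$\min\{x\cdot y_C:\ x\in\mathbb{S}^{n-1},\ x\cdot y\in[-1,1/n]\ \text{for all } y\in C\}\le0.$$
   Context: $\mathbb{S}^{n-1}$ is the unit sphere in $\mathbb{R}^n$; a spherical code is a finite set of distinct points on it. *)

(* Defs.v *)
From HB Require Import structures.
From mathcomp Require Import all_boot all_order all_algebra.
From mathcomp Require Import reals.
Set Implicit Arguments. Unset Strict Implicit. Unset Printing Implicit Defensive.
Import Order.TTheory GRing.Theory Num.Theory.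
Local Open Scope ring_scope.

Definition dotv (R : realType) (n : nat) (x y : 'rV[R]_n) : R :=
  \sum_(i < n) x 0 i * y 0 i.

Definition on_sphere (R : realType) (n : nat) (x : 'rV[R]_n) : Prop :=
  dotv x x = 1.

Definition centroid (R : realType) (n m : nat) (c : 'I_m -> 'rV[R]_n) : 'rV[R]_n :=
  (m%:R)^-1 *: \sum_(j < m) c j.

Definition feasible (R : realType) (n m : nat) (c : 'I_m -> 'rV[R]_n)
  (x : 'rV[R]_n) : Prop :=
  on_sphere x /\ forall j : 'I_m, -1 <= dotv x (c j) <= (n%:R)^-1.

(* Main.v *)
Require Import Defs.
From HB Require Import structures.
From mathcomp Require Import all_boot all_order all_algebra.
From mathcomp Require Import reals.
From mathcomp Require Import ring lra.
From mathcomp Require Import boolp classical_sets topology normedtype derive.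
Import Order.TTheory GRing.Theory Num.Theory.
Import numFieldNormedType.Exports.
Local Open Scope classical_set_scope.
Local Open Scope ring_scope.

Section Dot.
Variable R : realType.
Variable n : nat.
Implicit Types x y u v : 'rV[R]_n.

Lemma dotvC x y : dotv x y = dotv y x.
Proof. by apply: eq_bigr => i _; rewrite mulrC. Qed.

Lemma dotvZl a x y : dotv (a *: x) y = a * dotv x y.
Proof. by rewrite /dotv mulr_sumr; apply: eq_bigr => i _; rewrite mxE mulrA. Qed.

Lemma dotvDl x y z : dotv (x + y) z = dotv x z + dotv y z.
Proof. by rewrite /dotv -big_split; apply: eq_bigr => i _; rewrite mxE mulrDl. Qed.

Lemma dotvNl x z : dotv (- x) z = - dotv x z.
Proof. by rewrite /dotv -sumrN; apply: eq_bigr => i _; rewrite mxE mulNr. Qed.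

Lemma dotv_sumr m x (f : 'I_m -> 'rV[R]_n) :
  dotv x (\sum_(j < m) f j) = \sum_(j < m) dotv x (f j).
Proof.
rewrite /dotv exchange_big /=; apply: eq_bigr => i _.
by rewrite summxE mulr_sumr.
Qed.

Lemma dotv_ge0 x : 0 <= dotv x x.
Proof. by apply: sumr_ge0 => i _; rewrite -expr2 sqr_ge0. Qed.

Lemma dotv_gt0 x : x != 0 -> 0 < dotv x x.
Proof.
move=> nz; rewrite lt_def dotv_ge0 andbT; apply: contraNN nz => /eqP H.
have H2 : forall i, x 0 i * x 0 i = 0.
  move=> i; apply: (psumr_eq0P _ H) => // k _; by rewrite -expr2 sqr_ge0.
apply/eqP/rowP => i; rewrite mxE.
by apply/eqP; rewrite -(orbb (x 0 i == 0)) -mulf_eq0 H2.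
Qed.

Lemma dot_ge_m1 u v : on_sphere u -> on_sphere v -> -1 <= dotv u v.
Proof.
move=> hu hv; have := dotv_ge0 (u + v).
rewrite dotvDl dotvC dotvDl (dotvC v (u + v)) dotvDl hu hv dotvC.
lra.
Qed.

Lemma cs1 x v : on_sphere v -> dotv x v ^+ 2 <= dotv x x.
Proof.
move=> hv; have := dotv_ge0 (x - dotv x v *: v).
rewrite dotvDl dotvNl dotvZl (dotvC x) (dotvC v) !dotvDl !dotvNl !dotvZl hv (dotvC v x).
nra.
Qed.

End Dot.

Lemma normalize (R : realType) n m (c : 'I_m -> 'rV[R]_n)
  (c_sph : forall j, on_sphere (c j)) (s x : 'rV[R]_n) :
  0 < dotv x x ->
  (forall j, (Num.sqrt (dotv x x))^-1 * dotv x (c j) <= n%:R^-1) ->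
  dotv x s <= 0 -> exists x', feasible c x' /\ dotv x' s <= 0.
Proof.
move=> q0 hj hs; set q := dotv x x in q0 hj.
have sq0 : 0 < Num.sqrt q by rewrite sqrtr_gt0.
have sq2 : Num.sqrt q ^+ 2 = q by rewrite sqr_sqrtr // ltW.
set r := (Num.sqrt q)^-1 in hj.
have r0 : 0 < r by rewrite invr_gt0.
have rs : r * Num.sqrt q = 1 by rewrite mulVf // gt_eqF.
have hsph : on_sphere (r *: x).
  rewrite /on_sphere dotvZl dotvC dotvZl -/q -sq2.
  by transitivity ((r * Num.sqrt q) ^+ 2); [ring | rewrite rs expr1n].
exists (r *: x); split; last by rewrite dotvZl pmulr_rle0.
split => // j; apply/andP; split; first exact: dot_ge_m1.
by rewrite dotvZl hj.
Qed.

Lemma sum_ite (R : realType) m (k : 'I_m) (b : R) (f : 'I_m -> R) :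
  \sum_(j < m) (if j == k then b else 0) * f j = b * f k.
Proof.
rewrite (bigD1 k) //= eqxx big1 ?addr0 // => j /negbTE ->; by rewrite mul0r.
Qed.

Lemma partI (R : realType) n (hn : (1 <= n)%N) (c : 'I_n.+1 -> 'rV[R]_n)
  (c_sph : forall j, on_sphere (c j)) :
  exists x, feasible c x /\ dotv x (\sum_(j < n.+1) c j) <= 0.
Proof.
pose C : 'M[R]_(n.+1, n) := \matrix_(j, i) c j 0 i.
have mulC : forall x j, (x *m C^T) 0 j = dotv x (c j).
  by move=> x j; rewrite !mxE; apply: eq_bigr => i _; rewrite !mxE.
have N0 : (0 < n%:R :> R) by rewrite ltr0n.
set N := (n%:R : R)^-1.
have hN : N * n%:R = 1 by rewrite mulVf // gt_eqF.
have Npos : 0 < N by rewrite invr_gt0.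
have [lt|ge] := ltnP (\rank C) n.
  have : kermx C^T != 0.
    by rewrite kermx_eq0 -row_leq_rank mxrank_tr -ltnNge.
  case/rowV0Pn => x /sub_kermxP hx nz.
  have hv : forall j, dotv x (c j) = 0 by move=> j; rewrite -mulC hx mxE.
  apply: (@normalize _ _ _ c c_sph _ x); first exact: dotv_gt0.
    by move=> j; rewrite hv mulr0 ltW.
  by rewrite dotv_sumr big1.
have rkC : \rank C = n by apply/eqP; rewrite eqn_leq ge rank_leq_col.
have : kermx C != 0.
  by rewrite kermx_eq0 -row_leq_rank rkC ltnn.
case/rowV0Pn => l0 /sub_kermxP hl0 nzl0.
have [l [hl nzl L0]] : exists l : 'rV[R]_n.+1,
    [/\ l *m C = 0, l != 0 & 0 <= \sum_(j < n.+1) l 0 j].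
  have [h|h] := leP 0 (\sum_(j < n.+1) l0 0 j); first by exists l0.
  exists (- l0); split; first by rewrite mulNmx hl0 oppr0.
    by rewrite oppr_eq0.
  rewrite (eq_bigr (fun j => - l0 0 j)); last by move=> j _; rewrite mxE.
  by rewrite sumrN oppr_ge0 ltW.
case: (@arg_minP _ R _ ord0 predT (fun j => l 0 j) isT) => k _ kmin.
have kmin' : forall j, l 0 k <= l 0 j by move=> j; exact: kmin.
clear kmin.
set L := \sum_(j < n.+1) l 0 j in L0.
have [p pk lp] : exists2 p, p != k & 0 < l 0 p.
  apply/exists_inP; apply: contraNT nzl => /exists_inPn H.
  have H' : forall j, j != k -> l 0 j <= 0.
    by move=> j /H; rewrite ltNge negbK.
  have [j0 j0k] : exists j0 : 'I_n.+1, j0 != k.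
    case: (k =P ord0) => [->|/eqP]; last by exists ord0; rewrite eq_sym.
    by exists ord_max; rewrite -val_eqE /= -lt0n.
  have lk0 : l 0 k <= 0 by apply: le_trans (kmin' j0) (H' _ j0k).
  have sk : \sum_(j < n.+1 | j != k) l 0 j <= 0.
    by apply: sumr_le0 => j; exact: H'.
  have : L = l 0 k + \sum_(j < n.+1 | j != k) l 0 j by rewrite /L (bigD1 k).
  move=> HL.
  have lk : l 0 k = 0 by apply/eqP; rewrite eq_le lk0 /=; lra.
  apply/eqP/rowP => j; rewrite mxE; apply/eqP; rewrite eq_le.
  case: (j =P k) => [->|/eqP jk]; first by rewrite lk lexx.
  by rewrite H' //= -lk kmin'.
have hLk : (n.+1)%:R * l 0 k <= L.
  have -> : (n.+1)%:R * l 0 k = \sum_(j < n.+1) l 0 k.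
    by rewrite sumr_const card_ord mulr_natl.
  by apply: ler_sum => j _; exact: kmin'.
pose T := (L - (n.+1)%:R * l 0 k) * N.
have T0 : 0 <= T by rewrite /T mulr_ge0 ?subr_ge0 // ltW.
pose a := T / l 0 p.
have a0 : 0 <= a by rewrite /a divr_ge0 // ltW.
have hap : a * l 0 p = T by rewrite /a mulfVK // gt_eqF.
pose t : 'rV[R]_n.+1 := \row_j (N - (if j == k then (n.+1)%:R * N else 0)
                                  - (if j == p then a else 0)).
have tl : t *m l^T = 0.
  apply/matrixP => i i'; rewrite !ord1 !mxE.
  under eq_bigr do rewrite !mxE !mulrBl.
  rewrite !sumrB sum_ite sum_ite -mulr_sumr -/L hap /T.
  ring.

have sCK : (C^T <= kermx l^T)%MS.
  by apply/sub_kermxP; rewrite -trmx_mul hl trmx0.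
have rkK : \rank (kermx l^T) = n.
  by rewrite mxrank_ker mxrank_tr rank_rV nzl subn1.
have eqCK : (C^T == kermx l^T)%MS.
  by rewrite -(mxrank_leqif_eq sCK) mxrank_tr rkC rkK.
have stC : (t <= C^T)%MS.
  apply: submx_trans (_ : (kermx l^T <= C^T)%MS).
    exact/sub_kermxP.
  by case/andP: eqCK.
case/submxP: stC => x hx.
have hv : forall j, dotv x (c j) = t 0 j by move=> j; rewrite -mulC hx.
have tk : t 0 k = -1.
  rewrite mxE eqxx (negbTE (_ : k != p)); last by rewrite eq_sym.
  rewrite subr0 -addn1 natrD mulrDl mul1r mulrC hN; ring.
have tle : forall j, t 0 j <= N.
  have hX : 0 <= (n.+1)%:R * N by rewrite mulr_ge0 // ltW.
  by move=> j; rewrite mxE; case: (j == k); case: (j == p); lra.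
have tsum : \sum_(j < n.+1) t 0 j = - a.
  under eq_bigr do rewrite mxE.
  rewrite !sumrB sumr_const card_ord.
  rewrite (eq_bigr (fun j => (if j == k then (n.+1)%:R * N else 0) * 1)); last first.
    by move=> j _; rewrite mulr1.
  rewrite sum_ite.
  rewrite (eq_bigr (fun j => (if j == p then a else 0) * 1)); last first.
    by move=> j _; rewrite mulr1.
  rewrite sum_ite -mulr_natl; ring.
have q1 : 1 <= dotv x x.
  by have := @cs1 _ _ x _ (c_sph k); rewrite hv tk expr2 mulN1r opprK.
apply: (@normalize _ _ _ c c_sph _ x); first by apply: lt_le_trans q1.
  move=> j; rewrite hv.
  have sq0 : 0 < Num.sqrt (dotv x x) by rewrite sqrtr_gt0; apply: lt_le_trans q1.
  have sq2 : Num.sqrt (dotv x x) ^+ 2 = dotv x x by rewrite sqr_sqrtr // ltW //; apply: lt_le_trans q1.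
  set sq := Num.sqrt _ in sq0 sq2 *.
  set r := sq^-1.
  have r0 : 0 < r by rewrite invr_gt0.
  have rs : r * sq = 1 by rewrite mulVf // gt_eqF.
  have r1 : r <= 1 by nra.
  have := tle j; have [t0|t0] := leP 0 (t 0 j).
    have : r * t 0 j <= 1 * t 0 j by rewrite ler_wpM2r.
    rewrite -/N; lra.
  have : r * t 0 j <= 0 by rewrite pmulr_rle0 // ltW.
  rewrite -/N; lra.
by rewrite dotv_sumr (eq_bigr _ (fun j _ => hv j)) tsum oppr_le0.
Qed.
Lemma cont_sum (T : topologicalType) (R : realType) m (F : 'I_m -> T -> R) :
  (forall i, continuous (F i)) -> continuous (fun x => \sum_(i < m) F i x).
Proof.
elim: m F => [|m IH] F hF.
  have -> : (fun x => \sum_(i < 0) F i x) = (fun=> 0) by apply/funext => x; rewrite big_ord0.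
  exact: cst_continuous.
have -> : (fun x => \sum_(i < m.+1) F i x) =
   (fun x => \sum_(i < m) F (widen_ord (leqnSn m) i) x + F ord_max x).
  by apply/funext => x; rewrite big_ord_recr.
move=> x.
exact: (@continuousD R R^o T (fun x => \sum_(i < m) F (widen_ord (leqnSn m) i) x)
   (F ord_max) x (IH (fun i => F (widen_ord (leqnSn m) i)) (fun i => hF _) x) (hF _ x)).
Qed.

Lemma cont_dot (R : realType) n (v : 'rV[R]_n) : continuous (fun x : 'rV[R]_n => dotv x v).
Proof.
rewrite /dotv. have := (@cont_sum 'rV[R]_n R n (fun i x => x 0 i * v 0 i)). apply.  move=> i x.
apply: continuousM; [exact: coord_continuous | exact: cst_continuous].
Qed.

Lemma cont_dot2 (R : realType) n : continuous (fun x : 'rV[R]_n => dotv x x).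
Proof.
rewrite /dotv. have := (@cont_sum 'rV[R]_n R n (fun i x => x 0 i * x 0 i)). apply.  move=> i x.
apply: continuousM; exact: coord_continuous.
Qed.

Lemma coord_le1 (R : realType) n (x : 'rV[R]_n) i : on_sphere x -> `|x 0 i| <= 1.
Proof.
move=> hx.
have : x 0 i * x 0 i <= 1.
  rewrite -hx /dotv (bigD1 i) //= lerDl.
  by apply: sumr_ge0 => j _; rewrite -expr2 sqr_ge0.
move=> h; rewrite ler_norml; apply/andP; split; nra.
Qed.

Theorem lemma6p3 (R : realType) (n : nat) (hn : (2 <= n)%N)
  (c : 'I_n.+1 -> 'rV[R]_n) (c_inj : injective c)
  (c_sph : forall j, on_sphere (c j)) :
  (exists x : 'rV[R]_n, feasible c x) /\
  (exists x0 : 'rV[R]_n,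
     [/\ feasible c x0,
         (forall x : 'rV[R]_n, feasible c x -> dotv x0 (centroid c) <= dotv x (centroid c))
       & dotv x0 (centroid c) <= 0]).
Proof.
have [x0 [fx0 sx0]] := @partI R n (ltnW hn) c c_sph.
split; first by exists x0.
pose A : set 'rV[R]_n := [set x | feasible c x].
have A0 : A !=set0 by exists x0.
have cA : compact A.
  apply: bounded_closed_compact.
    apply: filterS (nbhs_pinfty_ge (@real1 R)) => M M1 x [hx _].
    apply: le_trans M1.
    rewrite [leLHS]/Num.Def.normr /= mx_normrE.
    apply: bigmax_le => // ij _.
    by rewrite (ord1 ij.1); exact: coord_le1.
  have -> : A = (fun x => dotv x x) @^-1` [set 1] `&`
     \bigcap_(j in setT) ((fun x => dotv x (c j)) @^-1` [set y | -1 <= y] `&`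
                          (fun x => dotv x (c j)) @^-1` [set y | y <= n%:R^-1]).
    apply/seteqP; split => x /=.
      by move=> [hs hj]; split => // j _ /=; have /andP[] := hj j.
    by move=> [hs hj]; split => // j; have [] := hj j I => /= -> ->.
  apply: closedI.
    by apply: preimage_closed; [move=> x _; exact: cont_dot2 | exact: closed_eq].
  apply: closed_bigI => j _; apply: closedI.
    by apply: preimage_closed; [move=> x _; exact: cont_dot | exact: closed_ge].
  by apply: preimage_closed; [move=> x _; exact: cont_dot | exact: closed_le].
have cf : {within A, continuous (fun x => dotv x (centroid c))}.
  exact/continuous_subspaceT/cont_dot.
have [z Az zmin] := EVT_min_rV A0 cA cf.
exists z; split.
- by move: Az; rewrite inE.
- by move=> x fx; apply: zmin; rewrite inE.
- have h : x0 \in A by rewrite inE.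
  apply: le_trans (zmin x0 h) _.
  rewrite /centroid dotvC dotvZl dotvC.
  by rewrite pmulr_rle0 // invr_gt0 ltr0n.
Qed.
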